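(* Let $X$ be a smooth projective curve of genus $g\ge 1$ over $\mathbb{F}_q$. Then, as $n\to\infty$, $$\widehat v_n = O\big(q^{(g-1)n(n+1)/2}\big),$$ where the implied constant depends only on $X/\mathbb{F}_q$.
   Context: The Artin zeta function of $X$ is $Z_X(t)=\sum_{D\ge 0} t^{\deg D}$, the sum being over effective divisors, with $t=q^{-s}$. It is a rational function $Z_X(t)=\frac{P_X(t)}{(1-t)(1-qt)}$, where $P_X$ is a polynomial of degree $2g$ with $P_X(0)=1$. Put $\zeta_X(s)=Z_X(q^{-s})$ and $\widehat\zeta_X(s):=q^{(g-1)s}\zeta_X(s)$. Define $\widehat\zeta_X^*(1):=\lim_{s\to 1}(1-q^{1-s})\widehat\zeta_X(s)=\frac{q^{g-1}P_X(q^{-1})}{1-q^{-1}}$ and, for $n\ge 1$, $\widehat v_n:=\widehat\zeta_X^*(1)\,\widehat\zeta_X(2)\widehat\zeta_X(3)\cdots\widehat\zeta_X(n)$. *)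

(* Defs.v *)
From mathcomp Require Import all_boot all_order all_algebra all_field.
Set Implicit Arguments. Unset Strict Implicit. Unset Printing Implicit Defensive.
Import Order.TTheory GRing.Theory Num.Theory.
Local Open Scope ring_scope.

Definition prime_power (q : nat) : Prop :=
  exists p k : nat, [/\ prime p, (0 < k)%N & q = (p ^ k)%N].

(* The Weil properties of the numerator P_X of the zeta function of a smooth
   projective curve of genus g over F_q: integer coefficients, degree 2g,
   P(0) = 1, functional equation P(t) = q^g t^(2g) P(1/(qt)), and the
   Riemann hypothesis (all complex roots have absolute value q^(-1/2)). *)
Definition weil_zeta_poly (q g : nat) (P : {poly int}) : Prop :=
  [/\ size P = (2 * g).+1,
      P`_0 = 1,
      (forall i : nat, (i <= 2 * g)%N ->
          P`_(2 * g - i) * (q%:Z ^+ i) = (q%:Z ^+ g) * P`_i)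
    & (forall z : algC, root (map_poly (fun a : int => a%:~R) P) z ->
          `|z| ^+ 2 * q%:R = 1)].

Section Zeta.
Variables (R : realFieldType) (q g : nat) (P : {poly int}).

Definition PR : {poly R} := map_poly (fun a : int => a%:~R) P.

Definition Zt (t : R) : R := PR.[t] / ((1 - t) * (1 - q%:R * t)).

Definition zetaX (s : int) : R := Zt ((q%:R : R) ^ (- s)).

Definition zetahat (s : int) : R := (q%:R : R) ^ ((g%:Z - 1) * s) * zetaX s.

Definition zetahat_star1 : R :=
  (q%:R : R) ^ (g%:Z - 1) * PR.[(q%:R)^-1] / (1 - (q%:R)^-1).

Definition vhat (n : nat) : R :=
  zetahat_star1 * \prod_(2 <= k < n.+1) zetahat k%:Z.

End Zeta.

(* Main.v *)
Require Import Defs.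
From mathcomp Require Import all_boot all_order all_algebra all_field.
From mathcomp Require Import ring lra zify.
Import Order.TTheory GRing.Theory Num.Theory.
Local Open Scope ring_scope.

Section S.
Variables (R : realFieldType) (q g : nat) (P : {poly int}).

Definition Asum : nat := (\sum_(i < 2 * g) absz (nth 0%R P i.+1))%N.

Lemma PR_bound (x : R) : size P = (2 * g).+1 -> P`_0 = 1 -> 0 <= x -> x <= 1 ->
  `|(PR R P).[x]| <= 1 + (Asum%:R) * x.
Proof.
move=> hs h0 x0 x1.
rewrite (@horner_coef_wide _ (2 * g).+1); last first.
  by rewrite -hs /PR /map_poly; exact: size_poly.
rewrite big_ord_recl /= expr0 mulr1.
have c0 : forall i, (PR R P)`_i = (P`_i)%:~R.
  by move=> i; rewrite /PR coef_map_id0 // mulr0z.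
rewrite c0 h0 /=.
apply: (le_trans (ler_normD _ _)); rewrite normr1 lerD2l.
apply: (le_trans (ler_norm_sum _ _ _)).
rewrite /Asum natr_sum mulr_suml; apply: ler_sum => i _.
rewrite c0 normrM natr_absz intr_norm.
rewrite /bump /= add1n.
apply: ler_wpM2l; first by rewrite normr_ge0.
rewrite ger0_norm ?exprn_ge0 // exprS.
rewrite -[leRHS](mulr1 x); apply: ler_wpM2l => //; exact: exprn_ile1.
Qed.
Lemma Zt_bound (k : nat) : (2 <= q)%N -> (2 <= k)%N -> size P = (2 * g).+1 -> P`_0 = 1 ->
  `|Zt q P ((q%:R : R)^-1 ^+ k)| <= 1 + (4 * (Asum + 1 + q))%:R * (q%:R : R)^-1 ^+ k.
Proof.
move=> hq hk hs h0.
set Q : R := q%:R; set t := Q^-1; set x := t ^+ k.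
have Q2 : 2 <= Q by rewrite /Q (ler_nat _ 2 q).
have Q0 : 0 < Q by lra.
have tQ : t * Q = 1 by rewrite /t mulVf // gt_eqF.
have t0 : 0 < t by rewrite /t invr_gt0.
have t2 : t <= 1/2 by nra.
case: k hk @x => [|[|k]] // _ x.
have x0 : 0 < x by rewrite /x exprn_gt0.
have ux : Q * x = t ^+ k.+1 by rewrite /x exprS mulrA [Q * t]mulrC tQ mul1r.
have u2 : Q * x <= 1/2.
  rewrite ux exprS; apply: (le_trans _ t2).
  rewrite -[leRHS](mulr1 t); apply: ler_wpM2l; first lra.
  by apply: exprn_ile1; lra.
have xu : 2 * x <= Q * x by apply: ler_wpM2r; lra.
set u := Q * x in u2 xu *.
have hP := PR_bound x hs h0 (ltW x0) (ltac:(lra) : x <= 1).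
rewrite /Zt -/Q -/u.
have den0 : 0 < (1 - x) * (1 - u) by apply: mulr_gt0; lra.
rewrite normrM normfV (gtr0_norm den0) ler_pdivrMr //.
apply: (le_trans hP).
set A : R := Asum%:R.
have A0 : 0 <= A by rewrite /A ler0n.
rewrite (_ : (4 * (Asum + 1 + q))%:R = 4 * (A + 1 + Q)); last first.
  by rewrite /A /Q natrM !natrD.
set D := 4 * (A + 1 + Q).
have D0 : 0 <= D * x by apply: mulr_ge0; [rewrite /D; lra | lra].
have h1 : (1 + D * x) * (1 - x - u) <= (1 + D * x) * ((1 - x) * (1 - u)).
  apply: ler_wpM2l; first lra.
  have : 0 <= x * u by apply: mulr_ge0; lra.
  move=> H; rewrite mulrBr mulr1 mulrBl mul1r; lra.
apply: le_trans h1.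
have h2 : D * x / 4 <= D * x * (1 - x - u).
  rewrite mulrC [_ * (1 - _ - _)]mulrC; apply: ler_wpM2r => //; lra.
have h3 : D * x / 4 = A * x + x + u.
  by rewrite /D /u; field.
rewrite mulrDl mul1r; lra.
Qed.
Lemma prod_tail (Q : R) (D m : nat) (a : nat -> R) : 2 <= Q ->
  (forall k, (m < k)%N -> 0 <= a k /\ a k <= 1 + D%:R * Q^-1 ^+ k) ->
  D%:R * Q^-1 ^+ m <= 1/2 ->
  forall j, \prod_(m.+1 <= k < (m + j).+1) a k <=
     2 * (1 - D%:R * Q^-1 ^+ (m + j) / (Q - 1)).
Proof.
move=> Q2 ha hm.
have Q0 : Q != 0 by apply/eqP => E; rewrite E in Q2; lra.
have Q1 : Q - 1 != 0 by apply/eqP => E; lra.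
have t0 : 0 <= Q^-1 by rewrite invr_ge0; lra.
have Dn : forall n, 0 <= D%:R * Q^-1 ^+ n by move=> n; rewrite mulr_ge0 ?exprn_ge0.
elim=> [|j IH].
  rewrite addn0 big_geq //.
  have : D%:R * Q^-1 ^+ m / (Q - 1) <= D%:R * Q^-1 ^+ m.
    rewrite ler_pdivrMr; last lra.
    rewrite -[leLHS]mulr1; apply: ler_wpM2l => //; lra.
  lra.
rewrite addnS big_nat_recr /=; last by rewrite ltnS leq_addr.
have [a0 a1] := ha (m + j).+1 (ltac:(rewrite ltnS leq_addr //)).
have P0 : 0 <= \prod_(m.+1 <= k < (m + j).+1) a k.
  rewrite big_seq_cond; apply: prodr_ge0 => k /andP [hk _].
  rewrite mem_index_iota in hk; case/andP: hk => hk _; by case: (ha k hk).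
set Pr := \prod_(_ <= _ < _) _ in IH P0 *.
set y := D%:R * Q^-1 ^+ (m + j) / (Q - 1) in IH *.
set x := D%:R * Q^-1 ^+ (m + j).+1 in a1.
have y0 : 0 <= y by rewrite /y divr_ge0 //; lra.
have x0 : 0 <= x by rewrite /x.
have hy : D%:R * Q^-1 ^+ (m + j).+1 / (Q - 1) = y - x.
  rewrite /y /x exprS; field; by rewrite Q0 Q1.
rewrite hy.
have h1 : Pr * a ((m + j).+1) <= 2 * (1 - y) * a ((m + j).+1) by apply: ler_wpM2r.
apply: (le_trans h1).
have h2 : 2 * (1 - y) * a ((m + j).+1) <= 2 * (1 - y) * (1 + x) by apply: ler_wpM2l => //; lra.
apply: (le_trans h2).
have : 0 <= y * x by apply: mulr_ge0.
move=> H; rewrite -mulrA; apply: ler_wpM2l; first lra.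
rewrite mulrDr mulr1 mulrBl mul1r; lra.
Qed.
End S.

Theorem mainTheorem1 (R : realFieldType) (q g : nat) (P : {poly int})
    (hq : prime_power q) (hg : (1 <= g)%N) (hP : weil_zeta_poly q g P) :
  exists C : R, 0 < C /\
    exists N : nat, forall n : nat, (N <= n)%N ->
      `|vhat R q g P n| <= C * (q%:R : R) ^+ (g.-1 * (n * n.+1)./2)%N.
Proof.
have q2 : (2 <= q)%N.
  case: hq => p [k [pp k0 ->]].
  apply: (leq_trans (prime_gt1 pp)); rewrite -{1}(expn1 p) leq_pexp2l //.
  exact: prime_gt0.
case: hP => hs h0 _ _.
set Q : R := q%:R.
have Q2 : 2 <= Q by rewrite /Q (ler_nat _ 2 q).
set t := Q^-1.
set f := fun k : nat => Zt q P (t ^+ k).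
have hz : forall k : nat, zetahat R q g P k%:Z = Q ^+ (g.-1 * k) * f k.
  move=> k; rewrite /zetahat /zetaX /f /t -/Q -exprz_inv.
  have -> : (g%:Z - 1) = g.-1%:Z by rewrite -subn1 subzn.
  by rewrite -PoszM.
set zs := zetahat_star1 R q g P.
have hv : forall n, vhat R q g P n =
    zs * (Q ^+ (g.-1 * \sum_(2 <= k < n.+1) k) * \prod_(2 <= k < n.+1) f k).
  move=> n; rewrite /vhat -/zs; congr (_ * _).
  under eq_bigr do rewrite hz.
  by rewrite big_split /= prodrXr big_distrr.
clearbody zs.
set D := (4 * (Asum g P + 1 + q))%N.
set m := (2 * D).+1.
have hm : D%:R * t ^+ m <= 1/2 :> R.
  have lt : (2 * D < q ^ m)%N by apply: (@leq_trans m) => //; exact: ltnW (ltn_expl m q2).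
  have Qm : 0 < Q ^+ m by apply: exprn_gt0; lra.
  rewrite /t exprVn ler_pdivrMr //.
  have : (2 * D)%:R <= Q ^+ m :> R by rewrite /Q -natrX ler_nat ltnW.
  rewrite natrM; lra.
have ha : forall k, (m < k)%N -> 0 <= `|f k| /\ `|f k| <= 1 + D%:R * Q^-1 ^+ k.
  move=> k hk; split => //; apply: Zt_bound => //.
  by apply: leq_trans hk; rewrite /m ltnS; lia.
have ht := @prod_tail R Q D m _ Q2 ha hm.
set Pm := \prod_(2 <= k < m.+1) `|f k|.
have Pm0 : 0 <= Pm by rewrite /Pm; apply: prodr_ge0 => k _.
exists ((`|zs| + 1) * (2 * Pm + 1)); split.
  by apply: mulr_gt0; apply: ltr_wpDl => //; apply: mulr_ge0.
exists m => n hn.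
rewrite hv !normrM normr_prod.
have Qe0 : 0 <= Q ^+ (g.-1 * \sum_(2 <= k < n.+1) k) by apply: exprn_ge0; lra.
rewrite (ger0_norm Qe0).
have hsum : (\sum_(2 <= k < n.+1) k <= (n * n.+1)./2)%N.
  have := bin2_sum n.+1; rewrite bin2 /= mulnC => <-.
  rewrite (@big_cat_nat _ _ _ 2 0 n.+1) //=; last by rewrite ltnS; apply: leq_trans hn.
  exact: leq_addl.
have hQ : Q ^+ (g.-1 * \sum_(2 <= k < n.+1) k) <= Q ^+ (g.-1 * (n * n.+1)./2).
  by rewrite ler_eXn2l ?leq_mul2l ?hsum ?orbT //; lra.
have hprod : \prod_(2 <= k < n.+1) `|f k| <= 2 * Pm.
  rewrite (@big_cat_nat _ _ _ m.+1) /=; try lia.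
  rewrite -/Pm mulrC; apply: ler_wpM2r => //.
  have := ht (n - m)%N; rewrite subnKC //.
  set y := (_ / (Q - 1)).
  have : 0 <= y by rewrite /y divr_ge0 // ?subr_ge0; [apply: mulr_ge0; rewrite ?exprn_ge0 ?invr_ge0 //; lra | lra].
  lra.
have hpr0 : 0 <= \prod_(2 <= k < n.+1) `|f k| by apply: prodr_ge0.
set E := Q ^+ (g.-1 * (n * n.+1)./2) in hQ *.
set e := Q ^+ _ in Qe0 hQ *.
set pr := \prod_(_ <= _ < _) _ in hprod hpr0 *.
have z0 : 0 <= `|zs| by [].
have E0 : 0 <= E by rewrite /E exprn_ge0 //; lra.
have H1 : e * pr <= E * (2 * Pm + 1) by apply: ler_pM => //; lra.
have H2 : `|zs| * (e * pr) <= (`|zs| + 1) * (E * (2 * Pm + 1)).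
  by apply: ler_pM => //; [apply: mulr_ge0 | lra].
apply: (le_trans H2); rewrite le_eqVlt; apply/orP; left; apply/eqP; ring.
Qed.
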